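(* Let $d\ge1$. There exists a constant $C_d>0$ such that for each $x\in\mathbb{R}^d$ there exists a family $(g_{1,x},g_{2,x},\dots,g_{d,x})\in(\mathcal{O}(\mathbb{Z}^d))^d$ with $g_{1,x}=\mathrm{Id}_{\mathbb{R}^d}$ such that the linear map $L_x:\mathbb{R}^d\to\mathbb{R}^d$ defined by $L_x(e_i)=g_{i,x}(x)$ for $i=1,\dots,d$ satisfies \[ \forall y\in\mathbb{R}^d\qquad C_d\|y\|_1\|x\|_1\le\|L_x(y)\|_1\le\|y\|_1\|x\|_1 . \] Moreover, if for each $n\in\mathcal{S}_2$ one sets $(n_1,n_2,\dots,n_d)=(n,g_{2,n}(n),\dots,g_{d,n}(n))$, then \[ \forall y\in\mathbb{R}^d\qquad \frac{C_d}{d^{3/2}}\|y\|_2\le\Big(\sum_{m=1}^d\langle y,n_m\rangle^2\Big)^{1/2}\le\sqrt d\,\|y\|_2 . \]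
   Context: $(e_1,\dots,e_d)$ is the canonical basis of $\mathbb{R}^d$, $\|x\|_1=\sum_i|x_i|$, $\|x\|_2$ is the Euclidean norm, and $\mathcal{S}_2=\{x\in\mathbb{R}^d:\|x\|_2=1\}$. For a permutation $\sigma$ of $\{1,\dots,d\}$ and $\epsilon\in\{-1,+1\}^d$, let $\Psi_{\sigma,\epsilon}(x)=\sum_{i=1}^d\epsilon(i)x_{\sigma(i)}e_i$; $\mathcal{O}(\mathbb{Z}^d)=\{\Psi_{\sigma,\epsilon}\}$ is the group of orthogonal transformations preserving the lattice $\mathbb{Z}^d$. *)

(* Defs.v *)
From mathcomp Require Import all_boot all_order all_algebra fingroup perm.
From mathcomp Require Import reals.
Set Implicit Arguments. Unset Strict Implicit. Unset Printing Implicit Defensive.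
Import Order.TTheory GRing.Theory Num.Theory.
Local Open Scope ring_scope.

Section Defs.
Variables (R : realType) (d : nat).

(* An element of O(Z^d) is encoded by a permutation sigma of 'I_d and a sign
   vector epsilon (true = -1, false = +1). *)
Definition OZd := ({perm 'I_d} * {ffun 'I_d -> bool})%type.

Definition Psi (g : OZd) (x : 'rV[R]_d) : 'rV[R]_d :=
  \row_i ((-1) ^+ (g.2 i) * x 0 (g.1 i)).

Definition l1norm (x : 'rV[R]_d) : R := \sum_i `|x 0 i|.
Definition dotp (x y : 'rV[R]_d) : R := \sum_i x 0 i * y 0 i.
Definition l2norm (x : 'rV[R]_d) : R := Num.sqrt (dotp x x).

Definition Lmap (gx : 'I_d -> OZd) (x y : 'rV[R]_d) : 'rV[R]_d :=
  \sum_i y 0 i *: Psi (gx i) x.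

End Defs.

(* Main.v *)
Require Import Defs.
From mathcomp Require Import all_boot all_order all_algebra fingroup perm.
From mathcomp Require Import reals.
From mathcomp Require Import zify ring lra.
Set Implicit Arguments. Unset Strict Implicit. Unset Printing Implicit Defensive.
Import Order.TTheory GRing.Theory Num.Theory.
Local Open Scope ring_scope.
Section Gen.
Variable R : realType.

Lemma CS (I : finType) (a b : I -> R) :
  (\sum_i a i * b i) ^+ 2 <= (\sum_i a i ^+ 2) * (\sum_i b i ^+ 2).
Proof.
rewrite expr2 big_distrlr /= big_distrlr /=.
apply: (@le_trans _ _ (\sum_i \sum_j ((a i ^+ 2 * b j ^+ 2 + a j ^+ 2 * b i ^+ 2) / 2))).
  apply: ler_sum => i _; apply: ler_sum => j _.
  have h : 0 <= (a i * b j - a j * b i) ^+ 2 by apply: sqr_ge0.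
  lra.
rewrite [X in X <= _](_ : _ = \sum_i \sum_j (a i ^+ 2 * b j ^+ 2) / 2
      + \sum_i \sum_j (a j ^+ 2 * b i ^+ 2) / 2); last first.
  rewrite -big_split /=; apply: eq_bigr => i _; rewrite -big_split /=.
  by apply: eq_bigr => j _; rewrite mulrDl.
rewrite [X in _ + X <= _]exchange_big /=.
rewrite -big_split /= le_eqVlt; apply/orP; left; apply/eqP.
apply: eq_bigr => i _; rewrite -big_split /=; apply: eq_bigr => j _.
by field.
Qed.

Lemma CSnat (L : nat) (f : nat -> R) :
  (\sum_(j < L) f j) ^+ 2 <= L%:R * \sum_(j < L) f j ^+ 2.
Proof.
have := @CS 'I_L (fun _ => 1) (fun j => f j).
have -> : \sum_(i < L) (1:R) * f i = \sum_(j < L) f j by apply: eq_bigr => i _; rewrite mul1r.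
have -> : \sum_(i < L) (1:R) ^+ 2 = L%:R by rewrite sumr_const card_ord expr1n.
done.
Qed.

Lemma term_le_sum (I : finType) (F : I -> R) j :
  (forall i, 0 <= F i) -> F j <= \sum_i F i.
Proof.
move=> h; rewrite (bigD1 j) //= lerDl; exact: sumr_ge0.
Qed.

Lemma tele (z sg : nat -> R) (L : nat) :
  \sum_(j < L) (\prod_(k < j) (- sg k)) * (z j + sg j * z j.+1)
  = z 0%N - (\prod_(k < L) (- sg k)) * z L.
Proof.
elim: L => [|L IH]; first by rewrite big_ord0 big_ord0 mul1r subrr.
rewrite big_ord_recr /= IH big_ord_recr /=. ring.
Qed.

Lemma prod_sq (sg : nat -> R) (L : nat) :
  (forall k, sg k ^+ 2 = 1) -> (\prod_(k < L) (- sg k)) ^+ 2 = 1.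
Proof.
move=> h; elim: L => [|L IH]; first by rewrite big_ord0 expr1n.
by rewrite big_ord_recr /= exprMn IH sqrrN h mul1r.
Qed.

Lemma eq_ltn_predL (N : nat) : (0 < N)%N -> (N.-1 < N)%N. Proof. by rewrite ltn_predL. Qed.

Lemma abel (N : nat) (b e : nat -> R) (k : R) :
  (0 < N)%N ->
  (forall r, (r < N)%N -> k <= \sum_(j < r.+1) e j) ->
  (forall r, (r.+1 < N)%N -> b r.+1 <= b r) ->
  0 <= b N.-1 ->
  k * b 0%N <= \sum_(r < N) b r * e r.
Proof.
move=> N0 hP hb hlast.
have key : forall M, (M < N)%N ->
  k * (b 0%N - b M) <= \sum_(r < M.+1) b r * e r - b M * \sum_(j < M.+1) e j.
  elim=> [|M IH] hM.
    by rewrite !big_ord_recr !big_ord0 /= !add0r subrr mulr0 subrr.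
  have IH' := IH (ltnW hM).
  have hPM := hP M (ltnW hM).
  have hbM := hb M hM.
  rewrite big_ord_recr /= [\sum_(j < M.+2) e j]big_ord_recr /=.
  set S := \sum_(r < M.+1) b r * e r in IH' *.
  set P := \sum_(j < M.+1) e j in IH' hPM *.
  nra.
have := key N.-1 (eq_ltn_predL N0).
rewrite prednK //.
have := hP N.-1 (eq_ltn_predL N0); rewrite prednK //.
set P := \sum_(j < N) e j; set S := \sum_(r < N) b r * e r.
nra.
Qed.


Lemma qbound (N : nat) (y sg : 'I_N.+1 -> R) (m : 'I_N.+1) (L : nat) :
  (forall i, sg i ^+ 2 = 1) -> (L <= N.+1)%N ->
  (forall t, iter L (fun u => u + m) t = t) ->
  (forall t, \prod_(k < L) (- sg (iter k (fun u => u + m) t)) = -1) ->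
  4 * \sum_i y i ^+ 2 <= (N.+1)%:R ^+ 3 * \sum_i (y i + sg i * y (i + m)) ^+ 2.
Proof.
move=> hsg hL hper hrat.
set U := \sum_i (y i + sg i * y (i + m)) ^+ 2.
have U0 : forall i, 0 <= (y i + sg i * y (i + m)) ^+ 2 by move=> i; apply: sqr_ge0.
have ht : forall t, 4 * y t ^+ 2 <= (N.+1)%:R ^+ 2 * U.
  move=> t; set v := fun k => iter k (fun u => u + m) t.
  have := tele (fun j => y (v j)) (fun j => sg (v j)) L.
  rewrite (hrat t) /v (hper t) => E.
  have E2 : 2 * y t = \sum_(j < L) (\prod_(k < j) - sg (v k)) * (y (v j) + sg (v j) * y (v j + m)).
    rewrite E /v; ring.
  have := CSnat L (fun j => (\prod_(k < j) - sg (v k)) * (y (v j) + sg (v j) * y (v j + m))).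
  rewrite -E2.
  have -> : \sum_(j < L) ((\prod_(k < j) - sg (v k)) * (y (v j) + sg (v j) * y (v j + m))) ^+ 2
       = \sum_(j < L) (y (v j) + sg (v j) * y (v j + m)) ^+ 2.
    apply: eq_bigr => j _; rewrite exprMn (@prod_sq (fun k => sg (v k)) j) ?mul1r //.
  move=> h1.
  have h2 : \sum_(j < L) (y (v j) + sg (v j) * y (v j + m)) ^+ 2 <= L%:R * U.
    have -> : (L%:R : R) * U = \sum_(j < L) U by rewrite sumr_const card_ord mulr_natl.
    apply: ler_sum => j _.
    exact: (@term_le_sum _ (fun i => (y i + sg i * y (i + m)) ^+ 2) (v j) U0).
  have hLR : (L%:R : R) <= (N.+1)%:R by rewrite ler_nat.
  have hL0 : (0 : R) <= L%:R by apply: ler0n.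
  have hU : 0 <= U by apply: sumr_ge0.
  have : (2 * y t) ^+ 2 <= L%:R * (L%:R * U) by apply: (le_trans h1); apply: ler_wpM2l.
  move=> h3.
  have h4 : (L%:R : R) * (L%:R * U) <= (N.+1)%:R ^+ 2 * U.
    rewrite mulrA -expr2; apply: ler_wpM2r => //; apply: lerXn2r => //; rewrite nnegrE //.
  have : (2 * y t) ^+ 2 = 4 * y t ^+ 2 by ring.
  lra.
rewrite mulr_sumr.
apply: (@le_trans _ _ (\sum_(t : 'I_N.+1) (N.+1)%:R ^+ 2 * U)).
  by apply: ler_sum => t _; apply: ht.
rewrite sumr_const card_ord -mulr_natl exprS; lra.
Qed.

End Gen.
Section NT.
Variable N : nat.
Local Notation d := N.+1.

Lemma valD (u m : 'I_d) :
  val (u + m) = (if (d <= val u + val m)%N then val u + val m - d else val u + val m)%N.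
Proof.
rewrite /= ; have hu := ltn_ord u; have hm := ltn_ord m.
case: ifP => h.
  rewrite -{1}(subnK h) modnDr modn_small //; lia.
rewrite modn_small //; lia.
Qed.

Definition vw (t m : 'I_d) k := iter k (fun u => u + m) t.
Definition wr (t m : 'I_d) j : nat := (d <= val (vw t m j) + val m)%N.

Lemma walk (t m : 'I_d) k :
  (val (vw t m k) + d * \sum_(j < k) wr t m j = val t + k * val m)%N.
Proof.
elim: k => [|k IH].
  by rewrite big_ord0 muln0 mul0n.
rewrite big_ord_recr.
set S := \sum_(j < k) wr t m j in IH *.
have -> : vw t m k.+1 = vw t m k + m by [].
rewrite valD /wr.
have hv := ltn_ord (vw t m k); have hm := ltn_ord m.
move: IH hv hm; rewrite /=.
case: ifP => h /=; nia.
Qed.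

Definition Lm (m : 'I_d) : nat := (d %/ gcdn (val m) d)%N.

Lemma Lm_le (m : 'I_d) : (Lm m <= d)%N.
Proof. exact: leq_div. Qed.

Lemma Lm_mul (m : 'I_d) : (val m * Lm m = d * (val m %/ gcdn (val m) d))%N.
Proof. by rewrite /Lm muln_divCA_gcd. Qed.

Lemma walk_per (t m : 'I_d) : vw t m (Lm m) = t.
Proof.
apply: val_inj => /=.
have := walk t m (Lm m); rewrite [(Lm m * _)%N]mulnC Lm_mul.
have hv := ltn_ord (vw t m (Lm m)); have ht := ltn_ord t.
move=> E.
have h1 : ((val (vw t m (Lm m)) + d * \sum_(j < Lm m) wr t m j) %% d = val (vw t m (Lm m)))%N.
  by rewrite addnC mulnC modnMDl modn_small.
have h2 : ((val t + d * (val m %/ gcdn (val m) d)) %% d = val t)%N.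
  by rewrite addnC mulnC modnMDl modn_small.
by rewrite -h1 E h2.
Qed.

Lemma walk_W (t m : 'I_d) : (\sum_(j < Lm m) wr t m j = val m %/ gcdn (val m) d)%N.
Proof.
have := walk t m (Lm m); rewrite walk_per [(Lm m * _)%N]mulnC Lm_mul => /eqP.
by rewrite eqn_add2l eqn_mul2l /= => /eqP.
Qed.

Lemma Lm_parity (m : 'I_d) : ~~ odd (Lm m) -> odd (val m %/ gcdn (val m) d).
Proof.
move=> hL; case hW : (odd (val m %/ gcdn (val m) d)) => //.
have g0 : (0 < gcdn (val m) d)%N by rewrite gcdn_gt0 orbT.
have h1 : (2 %| Lm m)%N by rewrite dvdn2.
have h2 : (2 %| val m %/ gcdn (val m) d)%N by rewrite dvdn2 hW.
have hd : (2 * gcdn (val m) d %| d)%N.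
  by have := dvdn_mul h1 (dvdnn (gcdn (val m) d)); rewrite /Lm divnK // dvdn_gcdr.
have hm : (2 * gcdn (val m) d %| val m)%N.
  by have := dvdn_mul h2 (dvdnn (gcdn (val m) d)); rewrite divnK // dvdn_gcdl.
have : (2 * gcdn (val m) d %| gcdn (val m) d)%N by rewrite dvdn_gcd hm hd.
move/(dvdn_leq g0); lia.
Qed.

End NT.

Section Q.
Variable R : realType.
Variable N : nat.
Local Notation d := N.+1.

Definition base (m i : 'I_d) : bool := (d <= val i + val m)%N && ~~ odd (Lm m).
Definition sgb (m i : 'I_d) : R := (-1) ^+ base m i.

Lemma prod_sign (L : nat) (b : nat -> bool) :
  \prod_(k < L) (- (-1) ^+ b k) = (-1) ^+ (L + \sum_(k < L) b k)%N :> R.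
Proof.
elim: L => [|L IH]; first by rewrite !big_ord0.
rewrite big_ord_recr /= IH big_ord_recr /= !exprD exprS; ring.
Qed.

Lemma ratio (m t : 'I_d) : \prod_(k < Lm m) (- sgb m (vw t m k)) = -1.
Proof.
rewrite /sgb (prod_sign (Lm m) (fun k => base m (vw t m k))) -signr_odd.
suff -> : odd (Lm m + \sum_(k < Lm m) base m (vw t m k)) by rewrite expr1.
case hL: (odd (Lm m)).
  by rewrite big1 ?addn0 // => k _; rewrite /base hL andbF.
have -> : (\sum_(k < Lm m) base m (vw t m k) = \sum_(k < Lm m) wr t m k)%N.
  by apply: eq_bigr => k _; rewrite /base hL andbT.
rewrite walk_W oddD hL /=; apply: Lm_parity; by rewrite hL.
Qed.

Definition qb (m : 'I_d) (y : 'I_d -> R) := \sum_i sgb m i * (y i * y (i + m)).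

Lemma sum_shift (y : 'I_d -> R) (m : 'I_d) : \sum_i y (i + m) = \sum_i y i.
Proof. by rewrite [RHS](reindex_inj (addIr m)). Qed.

Lemma qlow (m : 'I_d) (y : 'I_d -> R) :
  (2 / (d%:R ^+ 3) - 1) * \sum_i y i ^+ 2 <= qb m y.
Proof.
have := qbound (sg:=sgb m) (m:=m) (L:=Lm m) y (fun i => sqrr_sign _ _) (Lm_le m) (fun t => walk_per t m) (ratio m).
have -> : \sum_i (y i + sgb m i * y (i + m)) ^+ 2 = 2 * \sum_i y i ^+ 2 + 2 * qb m y.
  rewrite /qb.
  have -> : \sum_i (y i + sgb m i * y (i + m)) ^+ 2
     = \sum_i (y i ^+ 2 + y (i + m) ^+ 2 + 2 * (sgb m i * (y i * y (i + m)))).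
    apply: eq_bigr => i _; rewrite sqrrD exprMn /sgb sqrr_sign; ring.
  rewrite !big_split /= (sum_shift (fun i => y i ^+ 2)) -mulr_sumr; ring.
set S := \sum_i y i ^+ 2; set Q := qb m y => h.
have d0 : (0 : R) < d%:R ^+ 3 by rewrite exprn_gt0 // ltr0n.
have : 2 * S / d%:R ^+ 3 <= S + Q.
  rewrite ler_pdivrMr //; lra.
rewrite mulrBl mul1r mulrAC; set T := 2 / d%:R ^+ 3 * S; lra.
Qed.


Definition phin (r : nat) : nat := (if r == 0 then 0 else if odd r then r.+1./2 else d - r./2)%N.
Lemma hh r : (r.+1./2 = odd r + r./2 /\ odd r + r./2 * 2 = r)%N.
Proof. by rewrite -uphalf_half muln2 odd_double_half. Qed.
Lemma phin_lt r : (r < d)%N -> (phin r < d)%N.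
Proof.
rewrite /phin; have [h1 h2] := hh r; case: (r =P 0%N) => // ?; case: (odd r) h1 h2 => /= h1 h2; lia.
Qed.
Lemma phin_inj r1 r2 : (r1 < d)%N -> (r2 < d)%N -> phin r1 = phin r2 -> r1 = r2.
Proof.
rewrite /phin; have [h1 h2] := hh r1; have [h3 h4] := hh r2.
case: (r1 =P 0%N); case: (r2 =P 0%N); case: (odd r1) h1 h2; case: (odd r2) h3 h4 => /=; lia.
Qed.

Lemma phin_even k : (0 < k)%N -> phin (2 * k) = (d - k)%N.
Proof.
move=> h; rewrite /phin mul2n odd_double doubleK double_eq0.
by case: (k =P 0%N) => // ?; lia.
Qed.

Lemma phin_odd k : phin (2 * k).+1 = k.+1.
Proof. by rewrite /phin /= mul2n odd_double /= doubleK. Qed.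

Definition sfull (m i : 'I_d) : bool :=
  if (d < 2 * val m)%N then ~~ base (- m) (i + m) else base m i.

Definition qf (m : 'I_d) (y : 'I_d -> R) :=
  \sum_i (-1) ^+ sfull m i * (y i * y (i + m)).

Lemma valN (m : 'I_d) : (0 < val m)%N -> val (- m) = (d - val m)%N.
Proof. move=> h /=; have := ltn_ord m; move: h; rewrite /= => h h2; rewrite modn_small //; lia. Qed.

Lemma qf0 (y : 'I_d -> R) : qf 0 y = \sum_i y i ^+ 2.
Proof.
apply: eq_bigr => i _; rewrite /sfull /base /= addn0 addr0 leqNgt ltn_ord /= expr0 mul1r.
by rewrite expr2.
Qed.

Lemma qf_low (m : 'I_d) (y : 'I_d -> R) : (2 * val m <= d)%N ->
  (2 / (d%:R ^+ 3) - 1) * \sum_i y i ^+ 2 <= qf m y.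
Proof.
move=> h; have -> : qf m y = qb m y.
  by apply: eq_bigr => i _; rewrite /sfull ltnNge h /= /sgb.
exact: qlow.
Qed.

Lemma signN (b : bool) : (-1) ^+ (~~ b) = - (-1) ^+ b :> R.
Proof. by case: b; rewrite /= ?expr0 ?expr1 ?opprK. Qed.

Lemma qf_pair (m : 'I_d) (y : 'I_d -> R) : (0 < val m)%N -> (2 * val m < d)%N ->
  qf (- m) y = - qf m y.
Proof.
move=> h0 h1.
have e1 : (d < 2 * val (- m))%N by rewrite valN //; lia.
have e2 : (d < 2 * val m)%N = false by apply/negbTE; rewrite -leqNgt; lia.
rewrite /qf /sfull e1 e2 opprK.
rewrite (reindex_inj (addIr m)) /= -sumrN; apply: eq_bigr => j _.
rewrite addrK signN; ring.
Qed.

Definition Qn (y : 'I_d -> R) (k : nat) := qf (inord k) y.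

Lemma inordN k : (0 < k)%N -> (k < d)%N -> (inord (d - k) : 'I_d) = - inord k.
Proof.
move=> h0 h1; apply: val_inj; rewrite valN; last by rewrite /= inordK.
by rewrite /= !inordK //; lia.
Qed.

Lemma partial (y : 'I_d -> R) p :
  ((2 * p < d)%N -> \sum_(j < (2 * p).+1) Qn y (phin j) = \sum_i y i ^+ 2) /\
  (((2 * p).+1 < d)%N -> \sum_(j < (2 * p).+2) Qn y (phin j) = \sum_i y i ^+ 2 + Qn y p.+1).
Proof.
elim: p => [|p [IH1 IH2]].
  have i0 : (inord 0 : 'I_d) = 0 by apply: val_inj; rewrite /= inordK.
  split=> h; rewrite muln0.
    by rewrite big_ord1 /Qn /phin /= i0 qf0.
  by rewrite big_ord_recr big_ord1 /Qn /phin /= i0 qf0.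
have e1 : (2 * p.+1).+1 = (2 * p).+3 by lia.
have e2 : (2 * p.+1).+2 = (2 * p).+4 by lia.
have P2 : ((2 * p).+2 < d)%N -> \sum_(j < (2 * p).+3) Qn y (phin j) = \sum_i y i ^+ 2.
  move=> h; rewrite big_ord_recr /= IH2; last lia.
  have -> : phin (2 * p).+2 = (d - p.+1)%N.
    by rewrite -phin_even // mulnS.
  rewrite /Qn inordN; [|lia|lia].
  rewrite qf_pair; first ring.
    rewrite /= inordK; lia.
  rewrite /= inordK; lia.
split; rewrite ?e1 ?e2 => h.
  by apply: P2; lia.
rewrite big_ord_recr /= P2; last lia.
have -> : ((2 * p).+3 = (2 * p.+1).+1)%N by lia.
by rewrite phin_odd.
Qed.


Lemma kappa_le1 : (1 / (d%:R ^+ 3) : R) <= 1.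
Proof.
have d1 : (1 : R) <= d%:R ^+ 3 by rewrite exprn_ege1 // ler1n.
rewrite ler_pdivrMr ?mul1r //; lra.
Qed.

Lemma kappa_gt0 : (0 : R) < 1 / (d%:R ^+ 3).
Proof. by rewrite divr_gt0 // exprn_gt0 // ltr0n. Qed.

Lemma lowF (y : 'I_d -> R) (a : 'I_d -> R) (b : nat -> R) (phio : 'I_d -> 'I_d) :
  injective phio -> (forall r : 'I_d, val (phio r) = phin r) ->
  (forall r : 'I_d, a (phio r) = b r) ->
  (forall r, (r.+1 < d)%N -> b r.+1 <= b r) -> 0 <= b N ->
  1 / (d%:R ^+ 3) * b 0%N * \sum_i y i ^+ 2 <= \sum_m a m * qf m y.
Proof.
move=> pinj pval pab hb hN.
set Y := \sum_i y i ^+ 2.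
have Y0 : 0 <= Y by apply: sumr_ge0 => i _; apply: sqr_ge0.
have k1 := kappa_le1; have k0 := kappa_gt0.
set k := 1 / (d%:R ^+ 3) in k1 k0 *.
rewrite (reindex_inj pinj) /=.
have -> : \sum_j a (phio j) * qf (phio j) y = \sum_(r < d) b r * Qn y (phin r).
  apply: eq_bigr => r _; rewrite pab /Qn; congr (_ * qf _ y).
  by apply: val_inj; rewrite pval /= inordK // phin_lt.
rewrite [k * _ * _]mulrAC.
apply: (@abel _ d b (fun r => Qn y (phin r)) (k * Y)) => //.
move=> r hr; have := odd_double_half r; rewrite -muln2 mulnC.
case ho: (odd r) => /= er.
  have -> : r.+1 = (2 * r./2).+2 by lia.
  have [_ ->] := partial y r./2; last lia.
  have := qf_low (m := inord r./2.+1) y.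
  rewrite /= inordK; last lia.
  move=> /(_ ltac:(lia)) hq; rewrite /Qn.
  have e2 : 2 / d%:R ^+ 3 = 2 * k by rewrite /k mulrA mulr1.
  rewrite e2 -/Y in hq *.
  have : 0 <= k * Y by apply: mulr_ge0 => //; lra.
  nra.
have -> : r.+1 = (2 * r./2).+1 by lia.
have [P1 _] := partial y r./2; rewrite P1; last lia.
rewrite -/Y; nra.
Qed.

End Q.
Section Cons.
Variable R : realType.
Variable N : nat.
Local Notation d := N.+1.
Variable x : 'rV[R]_d.

Definition leX : rel 'I_d := fun i j => `|x 0 j| <= `|x 0 i|.
Definition srt : seq 'I_d := sort leX (enum 'I_d).
Lemma size_srt : size srt = d.
Proof. by rewrite size_sort size_enum_ord. Qed.
Lemma uniq_srt : uniq srt.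
Proof. by rewrite sort_uniq enum_uniq. Qed.
Definition rho (r : 'I_d) : 'I_d := nth ord0 srt r.
Lemma rho_inj : injective rho.
Proof.
move=> r1 r2 /eqP; rewrite /rho nth_uniq ?size_srt ?uniq_srt // => /eqP; exact: val_inj.
Qed.
Lemma leX_tr : transitive leX.
Proof. move=> b a c; rewrite /leX => h1 h2; exact: le_trans h2 h1. Qed.
Lemma leX_refl : reflexive leX.
Proof. by move=> i; rewrite /leX. Qed.
Lemma srt_sorted : sorted leX srt.
Proof. apply: sort_sorted => i j; rewrite /leX; exact: le_total. Qed.
Lemma srt_le (r1 r2 : nat) : (r1 <= r2)%N -> (r2 < d)%N ->
  `|x 0 (nth ord0 srt r2)| <= `|x 0 (nth ord0 srt r1)|.
Proof.
move=> h12 h2.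
have := sorted_leq_nth leX_tr leX_refl ord0 srt_sorted.
move=> /(_ r1 r2); rewrite !inE size_srt; apply => //; lia.
Qed.
Lemma rho_max k : `|x 0 k| <= `|x 0 (rho ord0)|.
Proof.
have hk : k \in srt by rewrite mem_sort mem_enum.
have hi : (index k srt < d)%N by have := index_mem k srt; rewrite hk size_srt.
have := srt_le (leq0n (index k srt)) hi.
by rewrite nth_index.
Qed.

Definition phio (r : 'I_d) : 'I_d := inord (phin N r).
Lemma phio_val r : val (phio r) = phin N r.
Proof. by rewrite /phio /= inordK // phin_lt. Qed.
Lemma phio_inj : injective phio.
Proof.
move=> r1 r2 h; apply: val_inj; have e1 := phio_val r1; have e2 := phio_val r2.
rewrite h e2 in e1.
exact: (phin_inj (ltn_ord r1) (ltn_ord r2) (esym e1)).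
Qed.
Definition phip : {perm 'I_d} := perm phio_inj.
Definition pi : {perm 'I_d} := phip^-1 * perm rho_inj.
Lemma pi_phi r : pi (phio r) = rho r.
Proof. by rewrite /pi permM -{1}(permE phio_inj r) permK permE. Qed.


Definition pinv : {perm 'I_d} := (pi^-1)%g.
Lemma piK r : pinv (pi r) = r. Proof. exact: permK. Qed.
Lemma piKV k : pi (pinv k) = k. Proof. exact: permKV. Qed.

Definition sb (k : 'I_d) : bool := x 0 k < 0.
Definition tau (k : 'I_d) : bool := sfull (pinv k) 0 (+) sb k.
Definition sigf (i k : 'I_d) : 'I_d := pi (pinv k - i).
Lemma sigf_inj i : injective (sigf i).
Proof. by move=> k1 k2 /perm_inj /addIr /perm_inj. Qed.
Definition sigp (i : 'I_d) : {perm 'I_d} := perm (@sigf_inj i).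
Definition eps (i : 'I_d) : {ffun 'I_d -> bool} :=
  [ffun k => tau k (+) sfull (pinv k - i) i (+) sb (sigp i k)].
Definition gx (i : 'I_d) : OZd d := (sigp i, eps i).
Lemma gx1 i : (gx i).1 = sigp i. Proof. by []. Qed.
Lemma gx2 i : (gx i).2 = eps i. Proof. by []. Qed.
Lemma sigpE i k : sigp i k = pi (pinv k - i). Proof. by rewrite permE. Qed.
Lemma epsE i k : eps i k = tau k (+) sfull (pinv k - i) i (+) sb (sigp i k).
Proof. by rewrite ffunE. Qed.

Definition wv (y : 'rV[R]_d) : 'rV[R]_d := \row_k ((-1) ^+ tau k * y 0 (pinv k)).
Definition av (m : 'I_d) : R := `|x 0 (pi m)|.

Lemma sign_abs j : (-1) ^+ sb j * x 0 j = `|x 0 j|.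
Proof.
rewrite /sb; case: ltrP => h.
  by rewrite expr1 mulN1r ltr0_norm.
by rewrite expr0 mul1r ger0_norm.
Qed.

Lemma gx0 (i : 'I_d) : nat_of_ord i = 0%N -> forall z : 'rV[R]_d, Psi (gx i) z = z.
Proof.
move=> hi z; have -> : i = 0 by apply: val_inj.
apply/rowP => k; rewrite mxE gx1 gx2 epsE sigpE subr0 piKV.
have -> : tau k (+) sfull (pinv k) 0 (+) sb k = false.
  by rewrite /tau; case: (sfull _ _); case: (sb k).
by rewrite expr0 mul1r.
Qed.

Lemma dot_i (y : 'rV[R]_d) (i : 'I_d) :
  dotp (wv y) (Psi (gx i) x) = \sum_m (-1) ^+ sfull m i * av m * y 0 (m + i).
Proof.
rewrite /dotp (reindex_inj (@perm_inj _ pi)) /=.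
rewrite [RHS](reindex_inj (addIr (- i))) /=.
apply: eq_bigr => r _.
rewrite !mxE gx1 gx2 epsE sigpE piK /av.
rewrite !signr_addb.
rewrite piK subrK -(sign_abs (pi (r - i))).
set A := (-1) ^+ sfull r 0 : R; set B := (-1) ^+ sb (pi r) : R.
set S := (-1) ^+ sfull (r - i) i : R; set C := (-1) ^+ sb (pi (r - i)) : R.
have hA : A * A = 1 by rewrite -expr2 sqrr_sign.
have hB : B * B = 1 by rewrite -expr2 sqrr_sign.
transitivity ((A * A) * (B * B) * (S * C * x 0 (pi (r - i)) * y 0 r)); first ring.
by rewrite hA hB !mul1r mulrA.
Qed.


Lemma Fid (y : 'rV[R]_d) :
  \sum_i y 0 i * dotp (wv y) (Psi (gx i) x) = \sum_m av m * qf m (fun i => y 0 i).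
Proof.
under eq_bigr => i _ do rewrite dot_i mulr_sumr.
rewrite exchange_big /=; apply: eq_bigr => m _.
rewrite /qf mulr_sumr; apply: eq_bigr => i _.
rewrite (addrC m i); ring.
Qed.

Lemma rho_nat (r : nat) : (r < d)%N -> rho (inord r) = nth ord0 srt r.
Proof. by move=> h; rewrite /rho inordK. Qed.

Lemma keyF (y : 'rV[R]_d) :
  1 / (d%:R ^+ 3) * `|x 0 (rho ord0)| * \sum_i y 0 i ^+ 2
  <= \sum_i y 0 i * dotp (wv y) (Psi (gx i) x).
Proof.
rewrite Fid.
have := @lowF R N (fun i => y 0 i) av (fun r => `|x 0 (rho (inord r))|) phio phio_inj phio_val.
have i0 : (inord 0 : 'I_d) = ord0 by apply: val_inj; rewrite /= inordK.
rewrite i0; apply.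
- by move=> r; rewrite /av pi_phi inord_val.
- move=> r hr; rewrite !rho_nat //; last lia.
  by apply: srt_le => //.
- exact: normr_ge0.
Qed.

End Cons.
Section Fin.
Variable R : realType.
Variable N : nat.
Local Notation d := N.+1.

Lemma Psi_l1 (g : OZd d) (v : 'rV[R]_d) : l1norm (Psi g v) = l1norm v.
Proof.
rewrite /l1norm [RHS](reindex_inj (@perm_inj _ g.1)).
by apply: eq_bigr => k _; rewrite mxE normrM normr_sign mul1r.
Qed.

Lemma Psi_dot (g : OZd d) (v : 'rV[R]_d) : dotp (Psi g v) (Psi g v) = dotp v v.
Proof.
rewrite /dotp [RHS](reindex_inj (@perm_inj _ g.1)).
apply: eq_bigr => k _; rewrite mxE -expr2 exprMn sqrr_sign mul1r expr2 //.
Qed.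

Lemma dot_sq (v : 'rV[R]_d) : dotp v v = \sum_i v 0 i ^+ 2.
Proof. by apply: eq_bigr => i _; rewrite expr2. Qed.

Lemma CSdot (a b : 'rV[R]_d) : dotp a b ^+ 2 <= dotp a a * dotp b b.
Proof. rewrite !dot_sq; exact: (CS (fun i => a 0 i) (fun i => b 0 i)). Qed.

Lemma CSsqrt (I : finType) (a b : I -> R) :
  \sum_i a i * b i <= Num.sqrt (\sum_i a i ^+ 2) * Num.sqrt (\sum_i b i ^+ 2).
Proof.
apply: (le_trans (ler_norm _)).
rewrite -sqrtr_sqr -sqrtrM; last by apply: sumr_ge0 => i _; apply: sqr_ge0.
apply: ler_wsqrtr; exact: CS.
Qed.

Lemma l1_ge0 (v : 'rV[R]_d) : 0 <= l1norm v.
Proof. by apply: sumr_ge0 => i _. Qed.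

Lemma l1_sq (v : 'rV[R]_d) : l1norm v ^+ 2 <= d%:R * \sum_i v 0 i ^+ 2.
Proof.
have := CS (fun _ : 'I_d => 1) (fun i => `|v 0 i|).
have -> : \sum_(i < d) (1:R) * `|v 0 i| = l1norm v by apply: eq_bigr => i _; rewrite mul1r.
have -> : \sum_(i < d) (1:R) ^+ 2 = d%:R by rewrite sumr_const card_ord expr1n.
have -> : \sum_(i < d) `|v 0 i| ^+ 2 = \sum_i v 0 i ^+ 2 by apply: eq_bigr => i _; rewrite real_normK // num_real.
done.
Qed.

Lemma Lmap_up (gx : 'I_d -> OZd d) (x y : 'rV[R]_d) :
  l1norm (Lmap gx x y) <= l1norm y * l1norm x.
Proof.
rewrite /Lmap /l1norm.
under eq_bigr => k _ do rewrite summxE.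
apply: (@le_trans _ _ (\sum_k \sum_i `|y 0 i| * `|Psi (gx i) x 0 k|)).
  apply: ler_sum => k _; apply: (le_trans (ler_norm_sum _ _ _)).
  by apply: ler_sum => i _; rewrite mxE normrM.
rewrite exchange_big /= mulr_suml; apply: ler_sum => i _.
rewrite -mulr_sumr; have := Psi_l1 (gx i) x; rewrite /l1norm => ->; done.
Qed.

Lemma dot_Lmap (gx : 'I_d -> OZd d) (x y w : 'rV[R]_d) :
  dotp w (Lmap gx x y) = \sum_i y 0 i * dotp w (Psi (gx i) x).
Proof.
rewrite /dotp /Lmap.
under eq_bigr => k _ do rewrite summxE mulr_sumr.
rewrite exchange_big /=; apply: eq_bigr => i _; rewrite mulr_sumr.
by apply: eq_bigr => k _; rewrite mxE; ring.
Qed.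

Lemma dot_le_l1 (w v : 'rV[R]_d) (B : R) :
  (forall k, `|w 0 k| <= B) -> dotp w v <= B * l1norm v.
Proof.
move=> hw; rewrite /dotp /l1norm mulr_sumr; apply: ler_sum => k _.
apply: (le_trans (ler_norm _)); rewrite normrM; apply: ler_wpM2r => //.
Qed.

Lemma entry_le_l1 (v : 'rV[R]_d) k : `|v 0 k| <= l1norm v.
Proof. by apply: (@term_le_sum _ _ (fun i => `|v 0 i|)). Qed.

Lemma max_ge_l1 (x : 'rV[R]_d) : l1norm x <= d%:R * `|x 0 (rho x ord0)|.
Proof.
rewrite /l1norm; apply: (@le_trans _ _ (\sum_(k < d) `|x 0 (rho x ord0)|)).
  by apply: ler_sum => k _; apply: rho_max.
by rewrite sumr_const card_ord mulr_natl.
Qed.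

End Fin.

Unset Implicit Arguments.

Theorem lemma2p2 (R : realType) (d : nat) (hd : (0 < d)%N) :
  exists C : R, 0 < C /\
  exists g : 'rV[R]_d -> 'I_d -> OZd d,
    (forall (x : 'rV[R]_d) (i : 'I_d), nat_of_ord i = 0%N ->
       forall z : 'rV[R]_d, Psi (g x i) z = z) /\
    (forall x y : 'rV[R]_d,
       C * l1norm y * l1norm x <= l1norm (Lmap (g x) x y) /\
       l1norm (Lmap (g x) x y) <= l1norm y * l1norm x) /\
    (forall n : 'rV[R]_d, l2norm n = 1 ->
       forall y : 'rV[R]_d,
         C / (d%:R * Num.sqrt d%:R) * l2norm y
           <= Num.sqrt (\sum_(m < d) (dotp y (Psi (g n m) n)) ^+ 2) /\
         Num.sqrt (\sum_(m < d) (dotp y (Psi (g n m) n)) ^+ 2)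
           <= Num.sqrt d%:R * l2norm y).
Proof.
case: d hd => [//|N] _.
set D : R := N.+1%:R.
have D1 : 1 <= D by rewrite /D ler1n.
have k0 := @kappa_gt0 R N.
set k : R := 1 / (D ^+ 3) in k0 *.
have D2 : 0 < D ^+ 2 by rewrite exprn_gt0 //; lra.
exists (k / D ^+ 2); split; first by rewrite divr_gt0.
exists (fun x => gx x); split.
  by move=> x i hi z; apply: gx0.
split.
  move=> x y; split; last exact: Lmap_up.
  set A := `|x 0 (rho x ord0)|; set Y2 := \sum_i y 0 i ^+ 2.
  set Y1 := l1norm y; set X1 := l1norm x; set Z := l1norm (Lmap (gx x) x y).
  have h1 := keyF x y; rewrite -dot_Lmap -/A -/Y2 in h1.
  have h2 : dotp (wv x y) (Lmap (gx x) x y) <= Y1 * Z.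
    apply: dot_le_l1 => j; rewrite mxE normrM normr_sign mul1r; exact: entry_le_l1.
  have h3 : X1 <= D * A := max_ge_l1 x.
  have h4 : Y1 ^+ 2 <= D * Y2 := l1_sq y.
  have A0 : 0 <= A by apply: normr_ge0.
  have Y20 : 0 <= Y2 by apply: sumr_ge0 => i _; apply: sqr_ge0.
  have Y10 : 0 <= Y1 by apply: l1_ge0.
  have X10 : 0 <= X1 by apply: l1_ge0.
  have Z0 : 0 <= Z by apply: l1_ge0.
  have h5 : k * X1 * Y1 ^+ 2 <= D ^+ 2 * (Y1 * Z).
    have e1 : k * X1 * Y1 ^+ 2 <= k * (D * A) * (D * Y2).
      apply: ler_pM; [| |apply: ler_wpM2l|] => //; try lra.
        by apply: mulr_ge0 => //; lra.
      exact: sqr_ge0.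
    have e2 : k * (D * A) * (D * Y2) = D ^+ 2 * (k * A * Y2) by ring.
    have e3 : D ^+ 2 * (k * A * Y2) <= D ^+ 2 * (Y1 * Z).
      apply: ler_wpM2l; [lra|]; exact: le_trans h1 h2.
    lra.
  have key : k * X1 * Y1 <= D ^+ 2 * Z.
    have [Y1z|Y1p] := eqVneq Y1 0.
      rewrite Y1z mulr0; apply: mulr_ge0; lra.
    have Y1p' : 0 < Y1 by rewrite lt_def Y1p.
    rewrite -(ler_pM2r Y1p'); rewrite expr2 in h5; nra.
  have -> : k / D ^+ 2 * Y1 * X1 = (k * X1 * Y1) / D ^+ 2 by ring.
  by rewrite ler_pdivrMr // [Z * _]mulrC.
move=> n hn y.
have hnn : dotp n n = 1.
  have h0 : 0 <= dotp n n by rewrite dot_sq; apply: sumr_ge0 => i _; apply: sqr_ge0.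
  by rewrite -(sqr_sqrtr h0); move: hn; rewrite /l2norm => ->; rewrite expr1n.
have yy0 : 0 <= dotp y y by rewrite dot_sq; apply: sumr_ge0 => i _; apply: sqr_ge0.
set S := Num.sqrt (\sum_(m < N.+1) dotp y (Psi (gx n m) n) ^+ 2).
have S0 : 0 <= S by apply: sqrtr_ge0.
set s := l2norm y.
have s0 : 0 <= s by apply: sqrtr_ge0.
have ss : s ^+ 2 = dotp y y by rewrite /s /l2norm sqr_sqrtr.
split; last first.
  rewrite /s /l2norm -sqrtrM; last lra.
  apply: ler_wsqrtr.
  apply: (@le_trans _ _ (\sum_(m < N.+1) dotp y y)).
    apply: ler_sum => m _; apply: (le_trans (CSdot _ _)).
    by rewrite Psi_dot hnn mulr1.
  by rewrite sumr_const card_ord mulr_natl.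
set y' : 'rV[R]_N.+1 := \row_r ((-1) ^+ tau n (pi n r) * y 0 (pi n r)).
have wy : wv n y' = y.
  apply/rowP => j; rewrite !mxE piKV mulrA -expr2 sqrr_sign mul1r //.
have hy' : \sum_i y' 0 i ^+ 2 = dotp y y.
  rewrite dot_sq [RHS](reindex_inj (@perm_inj _ (pi n))).
  by apply: eq_bigr => r _; rewrite mxE exprMn sqrr_sign mul1r.
have h1 := keyF n y'.
rewrite wy hy' -ss in h1.
have h2 : \sum_i y' 0 i * dotp y (Psi (gx n i) n) <= s * S.
  have := CSsqrt (fun i => y' 0 i) (fun i => dotp y (Psi (gx n i) n)).
  by rewrite hy' -ss sqrtr_sqr ger0_norm.
set A := `|n 0 (rho n ord0)| in h1.
have hA : 1 <= D * A.
  have hmax := rho_max n.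
  have A0 : 0 <= A by apply: normr_ge0.
  have e1 : A ^+ 2 <= 1.
    rewrite -hnn dot_sq /A real_normK ?num_real //.
    exact: (@term_le_sum _ _ (fun i => n 0 i ^+ 2) (rho n ord0) (fun i => sqr_ge0 _)).
  have e2 : 1 <= D * A ^+ 2.
    rewrite -hnn dot_sq; apply: (@le_trans _ _ (\sum_(i < N.+1) A ^+ 2)).
      apply: ler_sum => i _; rewrite -real_normK ?num_real //.
      by apply: lerXn2r; rewrite ?nnegrE //; apply: hmax.
    by rewrite sumr_const card_ord mulr_natl.
  nra.
have h3 : k * s ^+ 2 <= D * (s * S).
  have : k * (D * A) * s ^+ 2 <= D * (k * A * s ^+ 2) by rewrite le_eqVlt; apply/orP; left; apply/eqP; ring.
  have : k * s ^+ 2 <= k * (D * A) * s ^+ 2.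
    apply: ler_wpM2r; first exact: sqr_ge0.
    rewrite -{1}[k]mulr1; apply: ler_wpM2l; lra.
  have : D * (k * A * s ^+ 2) <= D * (s * S) by apply: ler_wpM2l; [lra| exact: le_trans h1 h2].
  lra.
have h4 : k * s <= D * S.
  have [sz|sp] := eqVneq s 0.
    rewrite sz mulr0; apply: mulr_ge0 => //; lra.
  have sp' : 0 < s by rewrite lt_def sp.
  rewrite -(ler_pM2r sp'); rewrite expr2 in h3; nra.
have sD : 1 <= Num.sqrt D by rewrite -sqrtr1 ler_wsqrtr.
have hc : k / D ^+ 2 / (D * Num.sqrt D) <= k / D.
  rewrite ler_pdivrMr; last by apply: mulr_gt0; lra.
  rewrite ler_pdivrMr //.
  have -> : k / D * (D * Num.sqrt D) * D ^+ 2 = k * (Num.sqrt D * D ^+ 2).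
    by field; rewrite gt_eqF //; lra.
  rewrite -{1}[k]mulr1; apply: ler_wpM2l; first lra.
  have : 1 <= D ^+ 2 by rewrite exprn_ege1.
  nra.
apply: (@le_trans _ _ (k / D * s)).
  by apply: ler_wpM2r.
rewrite mulrAC ler_pdivrMr; last lra. rewrite [S * _]mulrC.
done.
Qed.
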